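(* Let $g:\mathbb{R}\to\mathbb{R}$ be continuously differentiable, even and $\pi$-periodic. Let $n\ge 1$ and define $G(\vec{\mu})=\frac{1}{\pi}\int_{-\pi/2}^{\pi/2}\prod_{i=0}^{n-1} g(x+\mu_i)\,dx$ for $\vec\mu=(\mu_0,\dots,\mu_{n-1})\in\mathbb{R}^n$. Let $m$ be a positive integer and $\mu_0^*\in\mathbb{R}$ arbitrary, and let $\vec{\mu}^*$ be the point with $\mu^*_i=\mu^*_0+i\,m\pi/n$ for $i=0,\dots,n-1$ (the ''search strategy $(m,n)$'': consecutive observation angles separated by the constant $m\pi/n$). Then $\vec\mu^*$ is a stationary point of $G$: $\frac{\partial G}{\partial\mu_i}(\vec{\mu}^* )=0$ for all $i\in\{0,\dots,n-1\}$.
   Context: $g(x)$ is the probability of not detecting a target observed at angle $x$; $G$ is the average multi-observation probability of no detection over a uniformly distributed target orientation. *)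

(* Defs.v *)
From Stdlib Require Import Reals.
From Coquelicot Require Import Coquelicot.
Open Scope R_scope.

Fixpoint prodR (n : nat) (f : nat -> R) : R :=
  match n with
  | O => 1
  | S k => prodR k f * f k
  end.

(* G(mu) = (1/pi) * \int_{-pi/2}^{pi/2} prod_{i<n} g(x + mu_i) dx,
   where mu : nat -> R, only the indices 0..n-1 matter. *)
Definition Gfun (g : R -> R) (n : nat) (mu : nat -> R) : R :=
  / PI * RInt (fun x => prodR n (fun i => g (x + mu i))) (- (PI / 2)) (PI / 2).

Definition upd (mu : nat -> R) (i : nat) (t : R) : nat -> R :=
  fun j => if Nat.eqb j i then t else mu j.

(* Main.v *)
Require Import Defs.
From Stdlib Require Import Reals Lia Lra.
From Coquelicot Require Import Coquelicot.
Open Scope R_scope.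

Lemma prodR_ext n f f' : (forall j, (j < n)%nat -> f j = f' j) -> prodR n f = prodR n f'.
Proof.
  induction n; simpl; intros H; auto.
  rewrite IHn by (intros; apply H; lia). rewrite H by lia. reflexivity.
Qed.

Lemma prodR_first n f : prodR (S n) f = f O * prodR n (fun k => f (S k)).
Proof.
  induction n.
  - simpl. ring.
  - change (prodR (S (S n)) f) with (prodR (S n) f * f (S n)).
    rewrite IHn. simpl. ring.
Qed.

Lemma prodR_shift1 n f : f n = f O -> prodR n (fun k => f (S k)) = prodR n f.
Proof.
  destruct n; intros H. reflexivity.
  rewrite (prodR_first n f). simpl. rewrite H. ring.
Qed.

Lemma prodR_shift n b s : (forall j, b (j + n)%nat = b j) ->
  prodR n (fun k => b (s + k)%nat) = prodR n b.
Proof.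
  intros Hp. induction s.
  - reflexivity.
  - rewrite <- IHs.
    rewrite <- (prodR_shift1 n (fun k => b (s + k)%nat)).
    + apply prodR_ext; intros; f_equal; lia.
    + rewrite Nat.add_0_r. apply Hp.
Qed.

Lemma prodR_rev L c : prodR L (fun k => c (L - 1 - k)%nat) = prodR L c.
Proof.
  induction L. reflexivity.
  rewrite (prodR_first L (fun k => c (S L - 1 - k)%nat)).
  replace (S L - 1 - 0)%nat with L by lia.
  rewrite (prodR_ext L (fun k => c (S L - 1 - S k)%nat) (fun k => c (L - 1 - k)%nat))
    by (intros; f_equal; lia).
  rewrite IHL. simpl. ring.
Qed.

Lemma prodR_cont L (h : nat -> R -> R) x :
  (forall k, continuous (h k) x) -> continuous (fun y => prodR L (fun k => h k y)) x.
Proof.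
  intros H. induction L; simpl.
  - apply continuous_const.
  - apply (continuous_mult (fun y => prodR L (fun k => h k y)) (h L)); auto.
Qed.

Lemma exRc (f : R -> R) a b : (forall z, continuous f z) -> ex_RInt f a b.
Proof. intros H. apply (@ex_RInt_continuous R_CompleteNormedModule). intros; apply H. Qed.

Lemma RInt_period (h : R -> R) c : (forall x, continuous h x) ->
  (forall x, h (x + PI) = h x) -> RInt h c (c + PI) = RInt h 0 PI.
Proof.
  intros Hc Hp.
  assert (Ex : forall a b, ex_RInt h a b) by (intros; apply exRc; auto).
  rewrite <- (RInt_Chasles h c 0 (c + PI)) by auto.
  rewrite <- (RInt_Chasles h 0 PI (c + PI)) by auto.
  assert (Hs := RInt_comp_lin h 1 PI 0 c).
  replace (1 * 0 + PI) with PI in Hs by ring.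
  replace (1 * c + PI) with (c + PI) in Hs by ring.
  rewrite <- Hs by auto.
  rewrite (RInt_ext (fun y => scal 1 (h (1 * y + PI))) h) by
    (intros x _; replace (1 * x + PI) with (x + PI) by ring; rewrite Hp; unfold scal; simpl; unfold mult; simpl; ring).
  rewrite <- (opp_RInt_swap h 0 c) by auto.
  unfold plus, opp; simpl. ring.
Qed.

Theorem lemma3p2 (g : R -> R)
  (g_C1 : forall x, ex_derive g x /\ continuous (Derive g) x)
  (g_even : forall x, g (- x) = g x)
  (g_per : forall x, g (x + PI) = g x)
  (n : nat) (hn : (1 <= n)%nat)
  (m : nat) (hm : (1 <= m)%nat)
  (mu0 : R) :
  let mustar := fun i : nat => mu0 + INR i * INR m * PI / INR n in
  forall i : nat, (i < n)%nat ->
    is_derive (fun t => Gfun g n (upd mustar i t)) (mustar i) 0.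
Proof.
  intros mustar i Hi.
  assert (Hn0 : INR n <> 0) by (apply not_0_INR; lia).
  assert (gper_nat : forall N y, g (y + INR N * PI) = g y).
  { induction N; intros y. simpl. f_equal; ring.
    rewrite S_INR. replace (y + (INR N + 1) * PI) with ((y + INR N * PI) + PI) by ring.
    rewrite g_per. apply IHN. }
  assert (mu_per : forall j, mustar (j + n)%nat = mustar j + INR m * PI).
  { intros j. unfold mustar. rewrite plus_INR. field. auto. }
  assert (gcont : forall x, continuous g x).
  { intros x. apply (@ex_derive_continuous R_AbsRing R_NormedModule). apply g_C1. }
  assert (gcont_sh : forall c x, continuous (fun y => g (y + c)) x).
  { intros c x. apply (continuous_comp (fun y => y + c) g).
    apply (continuous_plus (fun y => y) (fun _ => c)).
    apply continuous_id. apply continuous_const. apply gcont. }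
  assert (Dper : forall y, Derive g (y + PI) = Derive g y).
  { intros y.
    assert (H1 : Derive (fun z => g (z + PI)) y = Derive g y)
      by (apply Derive_ext; intros; apply g_per).
    rewrite Derive_comp in H1.
    - replace (Derive (fun z => z + PI) y) with 1 in H1. lra.
      symmetry; apply is_derive_unique. auto_derive; auto; try ring.
    - apply g_C1.
    - auto_derive; auto. }
  assert (Dodd : forall y, Derive g (- y) = - Derive g y).
  { intros y.
    assert (H1 : Derive (fun z => g (- z)) y = Derive g y)
      by (apply Derive_ext; intros; apply g_even).
    rewrite (Derive_comp g Ropp) in H1.
    - replace (Derive Ropp y) with (-1) in H1. lra.
      symmetry; apply is_derive_unique. auto_derive; auto; try ring.
    - apply g_C1.
    - auto_derive; auto. }
  set (Q := fun x => prodR (n - 1) (fun k => g (x + mustar (i + 1 + k)%nat))).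
  assert (Qcont : forall x, continuous Q x).
  { intros x. unfold Q.
    apply (prodR_cont (n-1) (fun k y => g (y + mustar (i + 1 + k)%nat))).
    intros; apply gcont_sh. }
  assert (StepA : forall t x,
    prodR n (fun j => g (x + upd mustar i t j)) = g (x + t) * Q x).
  { intros t x.
    set (b := fun j => if Nat.eqb (j mod n) i then g (x + t) else g (x + mustar j)).
    transitivity (prodR n b).
    { apply prodR_ext. intros j Hj. unfold b, upd.
      rewrite Nat.mod_small by lia. destruct (Nat.eqb j i); reflexivity. }
    rewrite <- (prodR_shift n b i).
    2:{ intros j. unfold b.
        replace (j + n)%nat with (j + 1 * n)%nat by lia.
        rewrite Nat.Div0.mod_add.
        destruct (Nat.eqb (j mod n) i); auto.
        replace (1 * n)%nat with n by lia. rewrite mu_per.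
        replace (x + (mustar j + INR m * PI)) with ((x + mustar j) + INR m * PI) by ring.
        apply gper_nat. }
    replace (prodR n (fun k => b (i + k)%nat)) with
      (prodR (S (n - 1)) (fun k => b (i + k)%nat)) by (f_equal; lia).
    rewrite prodR_first.
    unfold b at 1. rewrite Nat.add_0_r, Nat.mod_small by lia.
    rewrite Nat.eqb_refl. f_equal.
    apply prodR_ext. intros k Hk. unfold b.
    assert (Hne : ((i + S k) mod n)%nat <> i).
    { intros E. assert (D := Nat.div_mod_eq (i + S k) n).
      rewrite E in D. set (q := ((i + S k) / n)%nat) in D.
      destruct q as [|q]; nia. }
    apply Nat.eqb_neq in Hne. rewrite Hne.
    f_equal. f_equal. f_equal. lia. }
  assert (Hd1 : forall x y, is_derive (fun u => g (x + u) * Q x) y (Derive g (x + y) * Q x)).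
  { intros x y.
    assert (HH : is_derive (fun u => Q x * g (x + u)) y (Q x * Derive g (x + y))).
    2:{ rewrite (Rmult_comm (Derive g (x + y))). eapply is_derive_ext. 2: exact HH. intros t; simpl. rewrite Rmult_comm. reflexivity.
        }
    apply is_derive_scal.
    assert (H := is_derive_comp g (fun u => x + u) y (Derive g (x + y)) 1).
    unfold scal in H; simpl in H; unfold mult in H; simpl in H.
    rewrite Rmult_1_l in H. apply H.
    - apply Derive_correct, g_C1.
    - auto_derive; auto; try ring. }
  set (a := - (PI / 2)). set (bb := PI / 2). set (mi := mustar i).
  assert (HC : is_derive (fun t => RInt (fun x => g (x + t) * Q x) a bb) mi
                 (RInt (fun x => Derive (fun u => g (x + u) * Q x) mi) a bb)).
  { apply (is_derive_RInt_param (fun u x => g (x + u) * Q x)).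
    - apply filter_forall. intros y t _. eexists. apply Hd1.
    - intros t _.
      apply (continuity_2d_pt_ext (fun u v => Derive g (v + u) * Q v)).
      { intros u v. symmetry. apply is_derive_unique. apply Hd1. }
      apply continuity_2d_pt_mult.
      + apply (continuity_1d_2d_pt_comp (Derive g) (fun u v => v + u)).
        * apply continuity_pt_filterlim. apply g_C1.
        * apply continuity_2d_pt_plus. apply continuity_2d_pt_id2. apply continuity_2d_pt_id1.
      + apply (continuity_1d_2d_pt_comp Q (fun u v => v)).
        * apply continuity_pt_filterlim. apply Qcont.
        * apply continuity_2d_pt_id2.
    - apply filter_forall. intros y. apply exRc. intros z.
      apply (continuous_mult (fun x => g (x + y)) Q). apply gcont_sh. apply Qcont. }
  set (k := fun x => Derive g (x + mi) * Q x).
  assert (kcont : forall x, continuous k x).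
  { intros x. unfold k. apply (continuous_mult (fun x => Derive g (x + mi)) Q).
    2: apply Qcont.
    apply (continuous_comp (fun y => y + mi) (Derive g)).
    apply (continuous_plus (fun y => y) (fun _ => mi)).
    apply continuous_id. apply continuous_const. apply g_C1. }
  assert (kper : forall x, k (x + PI) = k x).
  { intros x. unfold k. replace (x + PI + mi) with ((x + mi) + PI) by ring.
    rewrite Dper. f_equal. unfold Q. apply prodR_ext. intros j _.
    replace (x + PI + mustar (i + 1 + j)%nat) with ((x + mustar (i + 1 + j)%nat) + PI) by ring.
    apply g_per. }
  assert (Hmu_id : forall j, (j < n - 1)%nat ->
     mustar (i + 1 + (n - 1 - 1 - j))%nat = 2 * mi - mustar (i + 1 + j)%nat + INR m * PI).
  { intros j Hj.
    assert (E : INR (i + 1 + (n - 1 - 1 - j)) = INR i + INR n - 1 - INR j).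
    { set (N := (i + 1 + (n - 1 - 1 - j))%nat).
      assert (H : (N + j + 1 = i + n)%nat) by (unfold N; lia).
      apply (f_equal INR) in H. rewrite !plus_INR in H. simpl in H. lra. }
    unfold mi, mustar. rewrite E. rewrite !plus_INR. simpl. field. auto. }
  assert (krefl : forall x, k (- x - 2 * mi) = - k x).
  { intros x. unfold k. replace (- x - 2 * mi + mi) with (- (x + mi)) by ring.
    rewrite Dodd.
    assert (QE : Q (- x - 2 * mi) = Q x).
    { unfold Q.
      rewrite <- (prodR_rev (n - 1) (fun j => g (x + mustar (i + 1 + j)%nat))).
      apply prodR_ext. intros j Hj. rewrite Hmu_id by lia.
      rewrite <- g_even.
      replace (x + (2 * mi - mustar (i + 1 + j)%nat + INR m * PI)) with
        ((- (- x - 2 * mi + mustar (i + 1 + j)%nat)) + INR m * PI) by ring.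
      rewrite gper_nat. reflexivity. }
    rewrite QE. ring. }
  assert (I0 : RInt k a bb = 0).
  { assert (Ex : forall a b, ex_RInt k a b) by (intros; apply exRc; auto).
    assert (Hs := RInt_comp_lin k (-1) (- (2 * mi)) a bb).
    rewrite (RInt_ext (fun y => scal (-1) (k (-1 * y + - (2 * mi)))) k) in Hs.
    2:{ intros y _. replace (-1 * y + - (2 * mi)) with (- y - 2 * mi) by ring.
        rewrite krefl. unfold scal; simpl; unfold mult; simpl. ring. }
    specialize (Hs (Ex _ _)).
    set (c := -1 * bb + - (2 * mi)) in Hs.
    replace (-1 * a + - (2 * mi)) with (c + PI) in Hs by (unfold c, a, bb; field).
    rewrite <- (opp_RInt_swap k c (c + PI)) in Hs by auto.
    rewrite (RInt_period k c) in Hs by auto.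
    replace bb with (a + PI) in Hs by (unfold a, bb; field).
    rewrite (RInt_period k a) in Hs by auto.
    unfold opp in Hs; simpl in Hs.
    replace bb with (a + PI) by (unfold a, bb; field).
    rewrite (RInt_period k a) by auto. lra. }
  apply (is_derive_ext (fun t => / PI * RInt (fun x => g (x + t) * Q x) a bb)).
  { intros t. unfold Gfun. f_equal. apply RInt_ext. intros x _. symmetry. apply StepA. }
  replace 0 with (/ PI * RInt (fun x => Derive (fun u => g (x + u) * Q x) mi) a bb).
  apply is_derive_scal. exact HC.
  rewrite (RInt_ext _ k). rewrite I0. ring.
  intros x _. unfold k. apply is_derive_unique. apply Hd1.
Qed.
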